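(* Let $\mathcal V$ be a topological vector space over $\mathbb C$, $X$ a non-empty set, and $\mathbb C^X$ the vector space of all complex-valued functions on $X$. Let $T:\mathcal V\to\mathbb C^X$ be a map which is sublinear in the sense that for all $f,g\in\mathcal V$ and $\lambda\in\mathbb C$, $$|T(f+g)|\le |T(f)|+|T(g)|\quad\text{and}\quad |T(\lambda f)|=|\lambda|\,|T(f)|$$ (pointwise on $X$), and suppose that for every $x\in X$ the functional $T_x:\mathcal V\to\mathbb C$, $T_x(f):=T(f)(x)$, is continuous. Let $S=\{f\in\mathcal V: T(f)\text{ is unbounded on }X\}$. Then either $S=\emptyset$ or $S$ is dense and $G_\delta$ in $\mathcal V$.
   Context: No completeness of $\mathcal V$ is assumed. *)

(* Defs.v *)
From Stdlib Require Import Reals.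
Open Scope R_scope.

Definition Cx : Type := (R * R)%type.
Definition Cre (z : Cx) : R := fst z.
Definition Cim (z : Cx) : R := snd z.
Definition C0 : Cx := (0, 0).
Definition C1 : Cx := (1, 0).
Definition Cadd (z w : Cx) : Cx := (fst z + fst w, snd z + snd w).
Definition Copp (z : Cx) : Cx := (- fst z, - snd z).
Definition Cmul (z w : Cx) : Cx :=
  (fst z * fst w - snd z * snd w, fst z * snd w + snd z * fst w).
Definition Cmod (z : Cx) : R := sqrt (fst z ^ 2 + snd z ^ 2).

Definition C_open (U : Cx -> Prop) : Prop :=
  forall z, U z -> exists eps, 0 < eps /\
    forall w, Cmod (Cadd w (Copp z)) < eps -> U w.

Record TVS : Type := {
  vcar :> Type;
  vadd : vcar -> vcar -> vcar;
  vzero : vcar;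
  vopp : vcar -> vcar;
  vscal : Cx -> vcar -> vcar;
  vadd_assoc : forall u v w, vadd u (vadd v w) = vadd (vadd u v) w;
  vadd_comm : forall u v, vadd u v = vadd v u;
  vadd_zero : forall u, vadd u vzero = u;
  vadd_opp : forall u, vadd u (vopp u) = vzero;
  vscal_one : forall u, vscal C1 u = u;
  vscal_assoc : forall a b u, vscal a (vscal b u) = vscal (Cmul a b) u;
  vscal_distr_v : forall a u v, vscal a (vadd u v) = vadd (vscal a u) (vscal a v);
  vscal_distr_c : forall a b u, vscal (Cadd a b) u = vadd (vscal a u) (vscal b u);
  vopen : (vcar -> Prop) -> Prop;
  vopen_full : vopen (fun _ => True);
  vopen_inter : forall U W, vopen U -> vopen W -> vopen (fun v => U v /\ W v);
  vopen_union : forall (I : Type) (F : I -> vcar -> Prop),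
      (forall i, vopen (F i)) -> vopen (fun v => exists i, F i v);
  vadd_cont : forall (W : vcar -> Prop) u v, vopen W -> W (vadd u v) ->
      exists U1 U2, vopen U1 /\ vopen U2 /\ U1 u /\ U2 v /\
        forall u' v', U1 u' -> U2 v' -> W (vadd u' v');
  vscal_cont : forall (W : vcar -> Prop) a v, vopen W -> W (vscal a v) ->
      exists eps U, 0 < eps /\ vopen U /\ U v /\
        forall b v', Cmod (Cadd b (Copp a)) < eps -> U v' -> W (vscal b v')
}.

Arguments vadd {t}. Arguments vscal {t}. Arguments vopen {t}.

Definition dense {V : TVS} (S : V -> Prop) : Prop :=
  forall U : V -> Prop, vopen U -> (exists u, U u) -> exists u, U u /\ S u.

Definition G_delta {V : TVS} (S : V -> Prop) : Prop :=
  exists O : nat -> V -> Prop, (forall n, vopen (O n)) /\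
    forall v, S v <-> (forall n, O n v).

Definition continuous_VC {V : TVS} (phi : V -> Cx) : Prop :=
  forall U : Cx -> Prop, C_open U -> vopen (fun v => U (phi v)).

Definition unbounded {X : Type} (h : X -> Cx) : Prop :=
  ~ (exists M : R, forall x, Cmod (h x) <= M).

(* Main.v *)
Require Import Defs.
From Stdlib Require Import Reals.
From Stdlib Require Import Lra Classical.
From Coquelicot Require Complex.
Open Scope R_scope.

Lemma tri (a b : Cx) : Cmod (Cadd a b) <= Cmod a + Cmod b.
Proof. exact (Complex.Cmod_triangle a b). Qed.
Lemma cmod_opp (a : Cx) : Cmod (Copp a) = Cmod a.
Proof. exact (Complex.Cmod_opp a). Qed.

Lemma Copen_gt (r : R) : C_open (fun z => r < Cmod z).
Proof.
  intros z Hz. exists (Cmod z - r). split; [lra|].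
  intros w Hw.
  assert (E : z = Cadd w (Copp (Cadd w (Copp z)))).
  { destruct z, w; unfold Cadd, Copp; simpl; f_equal; ring. }
  pose proof (tri w (Copp (Cadd w (Copp z)))) as H.
  rewrite <- E, cmod_opp in H. lra.
Qed.

Lemma cmod_real (r : R) : 0 <= r -> Cmod (r, 0) = r.
Proof.
  intros Hr. change (sqrt (r ^ 2 + 0 ^ 2) = r). replace (r ^ 2 + 0 ^ 2) with (r * r) by ring.
  apply sqrt_square; lra.
Qed.

Lemma vscal0 (V : TVS) (u : V) : vscal C0 u = vzero V.
Proof.
  set (z := vscal C0 u).
  assert (Hz : z = vadd z z).
  { unfold z. rewrite <- vscal_distr_c. f_equal. unfold C0, Cadd; simpl; f_equal; ring. }
  assert (H : vadd (vadd z z) (vopp V z) = z).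
  { rewrite <- vadd_assoc, vadd_opp, vadd_zero. reflexivity. }
  rewrite <- Hz, vadd_opp in H. symmetry; exact H.
Qed.

Theorem mainTheorem1 (V : TVS) (X : Type) (hX : inhabited X) (T : V -> X -> Cx)
  (Hadd : forall (f g : V) (x : X),
      Cmod (T (vadd f g) x) <= Cmod (T f x) + Cmod (T g x))
  (Hscal : forall (f : V) (l : Cx) (x : X),
      Cmod (T (vscal l f) x) = Cmod l * Cmod (T f x))
  (Hcont : forall x : X, continuous_VC (fun f : V => T f x)) :
  let S := fun f : V => unbounded (T f) in
  (forall f, ~ S f) \/ (dense S /\ G_delta S).
Proof.
  intros S.
  destruct (classic (exists g, S g)) as [[g Hg]|Hn];
    [right | left; intros f Hf; apply Hn; exists f; exact Hf].
  split.
  - intros U HU [f Uf].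
    destruct (classic (S f)) as [Sf|nSf]; [exists f; split; assumption|].
    unfold S, unbounded in nSf. apply NNPP in nSf. destruct nSf as [M HM].
    destruct (vadd_cont V U f (vzero V) HU) as (U1 & U2 & _ & HU2 & HU1f & HU2z & Hsum);
      [rewrite vadd_zero; exact Uf|].
    destruct (vscal_cont V U2 C0 g HU2) as (eps & U' & Heps & _ & HU'g & Hsc);
      [rewrite vscal0; exact HU2z|].
    set (b := (eps / 2, 0) : Cx).
    assert (Hb : Cmod b = eps / 2) by (apply cmod_real; lra).
    set (g' := vscal b g).
    exists (vadd f g'). split.
    + apply Hsum.
      * exact HU1f.
      * apply Hsc; [|exact HU'g].
        replace (Cadd b (Copp C0)) with b by (unfold b, Cadd, Copp, C0; simpl; f_equal; ring).
        rewrite Hb; lra.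
    + intros [N HN]. apply Hg.
      exists ((N + M) / (eps / 2)). intros x.
      set (m1 := (-1, 0) : Cx).
      assert (Eg : g' = vadd (vadd f g') (vscal m1 f)).
      { rewrite (vadd_comm V f g'), <- vadd_assoc.
        rewrite <- (vscal_one V f) at 1. rewrite <- vscal_distr_c.
        replace (Cadd Defs.C1 m1) with C0 by (unfold Cadd, Defs.C1, m1, C0; simpl; f_equal; ring).
        rewrite vscal0, vadd_zero. reflexivity. }
      pose proof (Hadd (vadd f g') (vscal m1 f) x) as H1.
      rewrite <- Eg in H1. unfold g' in H1. rewrite !Hscal, Hb in H1.
      assert (Hm1 : Cmod m1 = 1).
      { change (sqrt ((-1) ^ 2 + 0 ^ 2) = 1). replace ((-1) ^ 2 + 0 ^ 2) with 1 by ring. apply sqrt_1. }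
      rewrite Hm1 in H1. fold g' in H1.
      pose proof (HN x). pose proof (HM x).
      apply (Rmult_le_reg_l (eps/2)); [lra|].
      field_simplify; [|lra]. lra.
  - exists (fun n f => exists x, INR n < Cmod (T f x)). split.
    + intros n. apply (vopen_union V X (fun x f => INR n < Cmod (T f x))).
      intros x. apply (Hcont x (fun z => INR n < Cmod z)). apply Copen_gt.
    + intros v. split.
      * intros Hv n. apply NNPP. intros Hne. apply Hv. exists (INR n).
        intros x. apply Rnot_lt_le. intros Hl. apply Hne. exists x; exact Hl.
      * intros Hall [M HM]. destruct (INR_unbounded M) as [n Hn].
        destruct (Hall n) as [x Hx]. pose proof (HM x). lra.
Qed.
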